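(* Let $n\ge 1$ be an integer. For every real $x$, $$J_0(x)+2\sum_{i=1}^{\infty}(-1)^iJ_{4in}(x)=\frac{1}{n}\sum_{\ell=0}^{n-1}\cos\Big(x\cos\frac{(1+4\ell)\pi}{4n}\Big),$$ i.e. $J_0(x)-2J_{4n}(x)+2J_{8n}(x)-\dots=\frac1n\sum_{\ell=0}^{n-1}\cos\big(x\cos\frac{1+4\ell}{4n}\pi\big)$, the series converging absolutely.
   Context: $J_p$ denotes the Bessel function of the first kind of integer order $p$, $J_p(x)=\sum_{k\ge0}(-1)^k\frac{(x/2)^{p+2k}}{k!\,(k+p)!}$ for $p\ge 0$. *)

(* Defs.v *)
From Stdlib Require Import Reals.
From Coquelicot Require Import Coquelicot.
Open Scope R_scope.

Definition besselJ (p : nat) (x : R) : R :=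
  Series (fun k : nat =>
    (-1) ^ k * (x / 2) ^ (p + 2 * k) / (INR (Factorial.fact k) * INR (Factorial.fact (k + p)))).

(* Main.v *)
Require Import Defs.
From Stdlib Require Import Reals Lia Lra ZArith.
From Coquelicot Require Import Coquelicot.
Open Scope R_scope.
Local Notation fact := Factorial.fact.

Fixpoint bin (n k : nat) : R :=
  match n, k with
  | O, O => 1
  | O, S _ => 0
  | S _, O => 1
  | S n', S k' => bin n' k' + bin n' (S k')
  end.

Lemma bin_0 n : bin n 0 = 1.
Proof. destruct n; reflexivity. Qed.

Lemma bin_gt n k : (n < k)%nat -> bin n k = 0.
Proof.
  revert k; induction n as [|n IH]; intros k Hk; destruct k; try lia; simpl; auto.
  rewrite !IH by lia; ring.
Qed.

Lemma bin_fact n k : (k <= n)%nat ->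
  bin n k * (INR (fact k) * INR (fact (n - k))) = INR (fact n).
Proof.
  revert k; induction n as [|n IH]; intros k Hk.
  - destruct k; [simpl; ring | lia].
  - destruct k as [|k].
    + rewrite bin_0. simpl (S n - 0)%nat. simpl (fact 0). simpl INR at 1. ring.
    + simpl bin. destruct (Nat.eq_dec k n) as [->|Hne].
      * rewrite (bin_gt n (S n)) by lia. rewrite Nat.sub_diag.
        assert (H := IH n (le_n n)). rewrite Nat.sub_diag in H. simpl fact at 2 in H.
        rewrite Rplus_0_r. simpl (S n - S n)%nat.
        rewrite (fact_simpl n). rewrite mult_INR. rewrite <- H at 2.
        simpl (fact 0). simpl INR. ring.
      * assert (H1 := IH k ltac:(lia)). assert (H2 := IH (S k) ltac:(lia)).
        replace (S n - S k)%nat with (n - k)%nat by lia.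
        replace (n - k)%nat with (S (n - S k)) in H1 |- * by lia.
        rewrite (fact_simpl (n - S k)) in H1 |- *.
        rewrite (fact_simpl k). rewrite (fact_simpl n).
        rewrite fact_simpl in H2.
        rewrite !mult_INR in *.
        rewrite !S_INR in *.
        rewrite minus_INR in * by lia. rewrite S_INR in *.
        transitivity ((INR n + 1) * INR (fact n)); [|ring].
        match type of H1 with ?L1 = _ => match type of H2 with ?L2 = _ => transitivity ((INR k + 1) * L1 + (INR n - INR k) * L2); [ring| rewrite H1, H2; ring] end end.
Qed.

Lemma pascal_sum N (g : nat -> R) :
  sum_f_R0 (fun j => bin (S N) j * g j) (S N) =
  sum_f_R0 (fun j => bin N j * g j) N + sum_f_R0 (fun j => bin N j * g (S j)) N.
Proof.
  rewrite decomp_sum by lia. simpl pred. rewrite bin_0.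
  assert (E : sum_f_R0 (fun i => bin (S N) (S i) * g (S i)) N =
     sum_f_R0 (fun i => bin N i * g (S i)) N + sum_f_R0 (fun i => bin N (S i) * g (S i)) N).
  { rewrite <- sum_plus. apply sum_eq. intros i _. simpl. ring. }
  rewrite E.
  assert (E2 : sum_f_R0 (fun j => bin N j * g j) (S N) = bin N 0 * g 0%nat + sum_f_R0 (fun i => bin N (S i) * g (S i)) N).
  { rewrite decomp_sum by lia. reflexivity. }
  rewrite tech5 in E2. rewrite bin_gt in E2 by lia. rewrite bin_0 in E2. lra.
Qed.

Lemma cos_pow N t :
  2 ^ N * cos t ^ N = sum_f_R0 (fun j => bin N j * cos ((INR N - 2 * INR j) * t)) N.
Proof.
  induction N as [|N IH].
  - simpl. replace ((0 - 2 * 0) * t) with 0 by ring. rewrite cos_0. ring.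
  - rewrite pascal_sum.
    transitivity (2 * cos t * (2 ^ N * cos t ^ N)); [simpl; ring|].
    rewrite IH. rewrite scal_sum. rewrite <- sum_plus. apply sum_eq. intros j _.
    rewrite !S_INR.
    replace ((INR N + 1 - 2 * INR j) * t) with ((INR N - 2 * INR j) * t + t) by ring.
    replace ((INR N + 1 - 2 * (INR j + 1)) * t) with ((INR N - 2 * INR j) * t - t) by ring.
    rewrite cos_plus, cos_minus. ring.
Qed.

Lemma fold_sum m (f : nat -> R) :
  sum_f_R0 f (2 * m) = sum_f_R0 (fun k => f (m - k)%nat + f (m + k)%nat) m - f m.
Proof.
  revert f; induction m as [|m IH]; intros f.
  - simpl. ring.
  - replace (2 * S m)%nat with (S (S (2 * m))) by lia.
    rewrite tech5. rewrite decomp_sum by lia. rewrite Nat.pred_succ.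
    rewrite (IH (fun j => f (S j))).
    rewrite tech5.
    replace (S m - S m)%nat with 0%nat by lia.
    replace (S m + S m)%nat with (S (S (2 * m))) by lia.
    replace (sum_f_R0 (fun k => f (S m - k)%nat + f (S m + k)%nat) m) with
      (sum_f_R0 (fun k => f (S (m - k)) + f (S (m + k))) m).
    + ring.
    + apply sum_eq. intros i Hi. f_equal; f_equal; lia.
Qed.

Lemma cos_pow2 m t :
  4 ^ m * cos t ^ (2 * m) =
  2 * sum_f_R0 (fun k => bin (2 * m) (m - k) * cos (2 * INR k * t)) m - bin (2 * m) m.
Proof.
  replace (4 ^ m) with (2 ^ (2 * m)) by (rewrite pow_mult; f_equal; ring).
  rewrite cos_pow. rewrite fold_sum.
  replace (m - 0)%nat with m by lia.
  assert (Hs : forall k, (k <= m)%nat -> bin (2 * m) (m + k) = bin (2 * m) (m - k)).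
  { intros k Hk.
    assert (A := bin_fact (2*m) (m+k) ltac:(lia)). assert (B := bin_fact (2*m) (m-k) ltac:(lia)).
    replace (2 * m - (m + k))%nat with (m - k)%nat in A by lia.
    replace (2 * m - (m - k))%nat with (m + k)%nat in B by lia.
    assert (P := INR_fact_lt_0 (m - k)). assert (Q := INR_fact_lt_0 (m + k)).
    apply Rmult_eq_reg_r with (INR (fact (m - k)) * INR (fact (m + k))); [|nra].
    rewrite B. rewrite <- A. ring. }
  replace (INR (2 * m) - 2 * INR m) with 0 by (rewrite mult_INR; simpl; ring).
  rewrite Rmult_0_l, cos_0, Rmult_1_r.
  rewrite scal_sum. apply Rplus_eq_compat_r. apply sum_eq. intros k Hk.
  rewrite Hs by auto.
  rewrite mult_INR, minus_INR, plus_INR by lia. simpl (INR 2).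
  replace (((1 + 1) * INR m - 2 * (INR m - INR k)) * t) with (2 * INR k * t) by ring.
  replace (((1 + 1) * INR m - 2 * (INR m + INR k)) * t) with (- (2 * INR k * t)) by ring.
  rewrite cos_neg. ring.
Qed.


Lemma tele a h N :
  2 * sin h * sum_f_R0 (fun l => cos (a + INR l * (2 * h))) N =
  sin (a + (2 * INR N + 1) * h) - sin (a - h).
Proof.
  induction N as [|N IH].
  - simpl. replace (a + 0 * (2 * h)) with a by ring.
    replace (a + (2 * 0 + 1) * h) with (a + h) by ring.
    rewrite sin_plus, sin_minus. ring.
  - rewrite tech5. rewrite Rmult_plus_distr_l, IH.
    rewrite S_INR.
    set (B := a + (INR N + 1) * (2 * h)).
    replace (a + (2 * INR N + 1) * h) with (B - h) by (unfold B; ring).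
    replace (a + (2 * (INR N + 1) + 1) * h) with (B + h) by (unfold B; ring).
    rewrite sin_plus, sin_minus. ring.
Qed.

Lemma cos_npi i : cos (INR i * PI) = (-1) ^ i.
Proof.
  induction i as [|i IH].
  - simpl. rewrite Rmult_0_l. apply cos_0.
  - rewrite S_INR. replace ((INR i + 1) * PI) with (INR i * PI + PI) by ring.
    rewrite neg_cos, IH. simpl. ring.
Qed.

Lemma sin_npi i : sin (INR i * PI) = 0.
Proof.
  induction i as [|i IH].
  - simpl. rewrite Rmult_0_l. apply sin_0.
  - rewrite S_INR. replace ((INR i + 1) * PI) with (INR i * PI + PI) by ring.
    rewrite neg_sin, IH. ring.
Qed.

Definition ee (n k : nat) : R :=
  if Nat.eqb (k mod (2 * n)) 0 then (-1) ^ (k / (2 * n)) else 0.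

Definition th (n l : nat) : R := (1 + 4 * INR l) * PI / (4 * INR n).

Lemma avg_cos n k : (1 <= n)%nat ->
  sum_f_R0 (fun l => cos (2 * INR k * th n l)) (n - 1) = INR n * ee n k.
Proof.
  intros Hn.
  assert (Hn0 : 0 < INR n) by (apply lt_0_INR; lia).
  set (a := INR k * PI / (2 * INR n)).
  set (h := INR k * PI / INR n).
  assert (Eq : forall l, 2 * INR k * th n l = a + INR l * (2 * h)).
  { intros l. unfold th, a, h. field. lra. }
  rewrite (sum_eq _ (fun l => cos (a + INR l * (2 * h)))) by (intros; rewrite Eq; auto).
  destruct (Nat.eq_dec (k mod n) 0) as [Hm|Hm].
  -
    set (q := (k / n)%nat).
    assert (Hk : k = (n * q)%nat) by (pose proof (Nat.div_mod_eq k n); unfold q; lia).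
    assert (Ha : a = INR q * PI / 2) by (unfold a; rewrite Hk, mult_INR; field; lra).
    assert (Hh : h = INR q * PI) by (unfold h; rewrite Hk, mult_INR; field; lra).
    rewrite (sum_eq _ (fun _ => cos a)).
    2:{ intros l _. rewrite Hh. replace (INR l * (2 * (INR q * PI))) with (2 * INR (l * q) * PI)
          by (rewrite mult_INR; ring). apply cos_period. }
    rewrite sum_cte. replace (S (n - 1)) with n by lia.
    rewrite Rmult_comm. f_equal.
    destruct (Nat.Even_or_Odd q) as [[i Hi]|[i Hi]].
    + assert (Hk2 : k = (i * (2 * n))%nat) by lia.
      unfold ee. rewrite Hk2, Nat.Div0.mod_mul, Nat.div_mul by lia. simpl.
      rewrite Ha, Hi, mult_INR. simpl INR.
      replace ((1 + 1) * INR i * PI / 2) with (INR i * PI) by field.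
      apply cos_npi.
    + assert (Hk2 : k = (i * (2 * n) + n)%nat) by lia.
      unfold ee.
      assert (Hmod : (k mod (2 * n))%nat = n).
      { symmetry. apply (Nat.mod_unique k (2 * n) i n); lia. }
      rewrite Hmod. destruct (Nat.eqb_spec n 0); [lia|].
      rewrite Ha, Hi, plus_INR, mult_INR. simpl INR.
      replace (((1 + 1) * INR i + 1) * PI / 2) with (INR i * PI + PI / 2) by field.
      rewrite cos_plus, cos_PI2, sin_npi. ring.
  - assert (Hs : sin h <> 0).
    { intros H0. apply sin_eq_0_0 in H0. destruct H0 as [z Hz].
      unfold h in Hz.
      assert (E : INR k = IZR z * INR n).
      { assert (PI <> 0) by (pose proof PI_RGT_0; lra).
        transitivity ((INR k * PI / INR n) * INR n / PI); [field; split; lra|].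
        rewrite Hz. field. auto. }
      rewrite !INR_IZR_INZ, <- mult_IZR in E. apply eq_IZR in E.
      apply Hm. apply Nat2Z.inj. rewrite Nat2Z.inj_mod. rewrite E. simpl.
      apply Z.mod_mul. lia. }
    assert (Hz : sum_f_R0 (fun l => cos (a + INR l * (2 * h))) (n - 1) = 0).
    { apply Rmult_eq_reg_l with (2 * sin h); [|lra].
      rewrite tele. rewrite Rmult_0_r.
      replace (a + (2 * INR (n - 1) + 1) * h) with (a - h + 2 * INR k * PI).
      - rewrite sin_period. ring.
      - rewrite minus_INR by lia. unfold a, h. simpl INR. field. lra. }
    rewrite Hz. unfold ee.
    destruct (Nat.eqb_spec (k mod (2 * n)) 0) as [H2|H2]; [|ring].
    exfalso. apply Hm.
    pose proof (Nat.div_mod_eq k (2 * n)). rewrite H2 in H.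
    rewrite H. rewrite Nat.add_0_r.
    replace (2 * n * (k / (2 * n)))%nat with ((2 * (k / (2 * n))) * n)%nat by lia.
    apply Nat.Div0.mod_mul.
Qed.


Lemma sparseA d (h : nat -> R) M : (1 <= d)%nat ->
  sum_f_R0 (fun k => if Nat.eqb (k mod d) 0 then h (k / d)%nat else 0) M = sum_f_R0 h (M / d).
Proof.
  intros Hd. induction M as [|M IH].
  - simpl. rewrite Nat.Div0.mod_0_l, Nat.Div0.div_0_l. reflexivity.
  - rewrite tech5, IH.
    pose proof (Nat.div_mod_eq M d) as HM. pose proof (Nat.mod_upper_bound M d ltac:(lia)) as Hr.
    set (q := (M / d)%nat) in *. set (r := (M mod d)%nat) in *.
    destruct (Nat.eq_dec (S r) d) as [E|E].
    + assert (Hm : (S M mod d = 0)%nat) by (symmetry; apply (Nat.mod_unique _ _ (S q)); lia).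
      assert (Hq : (S M / d = S q)%nat) by (symmetry; apply (Nat.div_unique _ _ (S q) 0); lia).
      rewrite Hm, Hq. simpl Nat.eqb. rewrite tech5. reflexivity.
    + assert (Hm : (S M mod d = S r)%nat) by (symmetry; apply (Nat.mod_unique _ _ q); lia).
      assert (Hq : (S M / d = q)%nat) by (symmetry; apply (Nat.div_unique _ _ q (S r)); lia).
      rewrite Hm, Hq. cbn [Nat.eqb]. ring.
Qed.

Lemma sparseB (h : nat -> R) A M :
  sum_f_R0 (fun i => if Nat.leb i A then h i else 0) M = sum_f_R0 h (Nat.min M A).
Proof.
  induction M as [|M IH].
  - simpl. destruct A; reflexivity.
  - rewrite tech5, IH. destruct (Nat.leb_spec (S M) A).
    + replace (Nat.min (S M) A) with (S M) by lia. replace (Nat.min M A) with M by lia.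
      rewrite tech5. reflexivity.
    + replace (Nat.min (S M) A) with A by lia. replace (Nat.min M A) with A by lia. ring.
Qed.

Lemma sparse d (h : nat -> R) M : (1 <= d)%nat ->
  sum_f_R0 (fun k => if Nat.eqb (k mod d) 0 then h (k / d)%nat else 0) M =
  sum_f_R0 (fun i => if Nat.leb (d * i) M then h i else 0) M.
Proof.
  intros Hd. rewrite sparseA by auto.
  rewrite (sum_eq (fun i => if Nat.leb (d * i) M then h i else 0) (fun i => if Nat.leb i (M / d) then h i else 0) M).
  - rewrite sparseB. f_equal. symmetry.
    assert (M / d <= M)%nat by (apply Nat.Div0.div_le_upper_bound; rewrite <- (Nat.mul_1_l M) at 1; apply Nat.mul_le_mono_r; exact Hd). apply Nat.min_r; assumption.
  - intros i _. destruct (Nat.leb_spec (d * i) M), (Nat.leb_spec i (M / d)); auto.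
    + exfalso. assert (d * i / d <= M / d)%nat by (apply Nat.Div0.div_le_mono; auto).
      rewrite Nat.mul_comm, Nat.div_mul in H1 by lia. lia.
    + exfalso. pose proof (Nat.Div0.mul_div_le M d). nia.
Qed.


Lemma geom_scal K q : 0 <= q < 1 -> is_series (fun i => K * q ^ i) (K / (1 - q)).
Proof.
  intros Hq. apply (is_series_ext (fun i => scal K (q ^ i))); [reflexivity|].
  unfold Rdiv. apply (is_series_scal_l K (fun i => q ^ i)). apply is_series_geom.
  rewrite Rabs_pos_eq; lra.
Qed.

Lemma series_bound (f : nat -> R) K q : 0 <= q < 1 -> (forall i, Rabs (f i) <= K * q ^ i) ->
  ex_series f /\ Rabs (Series f) <= K / (1 - q).
Proof.
  intros Hq Hf.
  assert (Ea : ex_series (fun i => Rabs (f i))).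
  { apply (@ex_series_le R_AbsRing R_CompleteNormedModule _ (fun i => K * q ^ i)).
    - intros i. change (norm (Rabs (f i))) with (Rabs (Rabs (f i))). rewrite Rabs_Rabsolu. auto.
    - eexists. apply geom_scal; auto. }
  split. { apply ex_series_Rabs; auto. }
  eapply Rle_trans. { apply Series_Rabs; auto. }
  rewrite <- (is_series_unique _ _ (geom_scal K q Hq)).
  apply Series_le.
  - intros i. split; [apply Rabs_pos| auto].
  - eexists. apply geom_scal; auto.
Qed.

Lemma fin_support (f : nat -> R) M : (forall i, (M < i)%nat -> f i = 0) ->
  is_series f (sum_f_R0 f M).
Proof.
  intros Hf. apply is_series_Reals. intros eps He. exists M. intros k Hk.
  assert (E : sum_f_R0 f k = sum_f_R0 f M).
  { induction Hk as [|k Hk IH]; auto. rewrite tech5, IH, Hf by lia. ring. }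
  rewrite E. unfold R_dist. rewrite Rminus_diag, Rabs_R0. auto.
Qed.

Lemma fsum_series (f : nat -> nat -> R) (g : nat -> R) N :
  (forall l, is_series (f l) (g l)) ->
  is_series (fun m => sum_f_R0 (fun l => f l m) N) (sum_f_R0 g N).
Proof.
  intros H. induction N as [|N IH].
  - simpl. apply H.
  - simpl. apply (is_series_plus _ _ _ _ IH (H (S N))).
Qed.

Lemma shift_zero (f : nat -> R) N : ex_series f -> (forall k, (k < N)%nat -> f k = 0) ->
  Series f = Series (fun k => f (N + k)%nat).
Proof.
  intros Ex Hf. destruct N as [|N].
  - apply Series_ext. intros; reflexivity.
  - rewrite (Series_incr_n f (S N)) by (auto; lia). simpl pred.
    rewrite (sum_eq _ (fun _ => 0)) by (intros; apply Hf; lia).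
    rewrite sum_cte. ring.
Qed.

Lemma fubini (u : nat -> nat -> R) C a b :
  0 <= a < 1 -> 0 <= b < 1 -> (forall i m, Rabs (u i m) <= C * a ^ i * b ^ m) ->
  ex_series (fun m => Series (fun i => u i m)) /\
  is_series (fun i => Series (u i)) (Series (fun m => Series (fun i => u i m))).
Proof.
  intros Ha Hb Hu.
  assert (HC : 0 <= C) by (specialize (Hu 0%nat 0%nat); simpl in Hu; pose proof (Rabs_pos (u 0%nat 0%nat)); lra).
  assert (Row : forall i, ex_series (u i)).
  { intros i. apply (proj1 (series_bound (u i) (C * a ^ i) b Hb (fun m => Hu i m))). }
  assert (Col : forall m, ex_series (fun i => u i m) /\ Rabs (Series (fun i => u i m)) <= C * b ^ m / (1 - a)).
  { intros m. apply series_bound; auto. intros i. replace (C * b ^ m * a ^ i) with (C * a ^ i * b ^ m) by ring. apply Hu. }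
  assert (BB : ex_series (fun m => Series (fun i => u i m))).
  { refine (proj1 (series_bound _ (C / (1 - a)) b Hb _)). intros m.
    replace (C / (1 - a) * b ^ m) with (C * b ^ m / (1 - a)) by (field; lra). apply Col. }
  split; auto.
  set (T := Series (fun m => Series (fun i => u i m))).
  assert (Key : forall N, Rabs (sum_f_R0 (fun i => Series (u i)) N - T) <= C * a ^ (S N) / (1 - a) / (1 - b)).
  { intros N.
    set (D := fun m => Series (fun i => u (S N + i)%nat m)).
    assert (HD : forall m, Series (fun i => u i m) - sum_f_R0 (fun i => u i m) N = D m).
    { intros m. rewrite (Series_incr_n (fun i => u i m) (S N)) by (try lia; apply Col). simpl pred. unfold D. ring. }
    assert (HDs : is_series D (T - sum_f_R0 (fun i => Series (u i)) N)).
    { apply (is_series_ext (fun m => plus (Series (fun i => u i m)) (opp (sum_f_R0 (fun i => u i m) N)))).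
      - intros m. rewrite <- HD. reflexivity.
      - assert (E1 : is_series (fun m => Series (fun i => u i m)) T) by (apply Series_correct; auto).
        assert (E2 := fsum_series (fun i m => u i m) (fun i => Series (u i)) N (fun l => Series_correct _ (Row l))).
        exact (is_series_minus _ _ _ _ E1 E2). }
    assert (Db : ex_series D /\ Rabs (Series D) <= C * a ^ (S N) / (1 - a) / (1 - b)).
    { apply series_bound; auto. intros m. unfold D.
      replace (C * a ^ S N / (1 - a) * b ^ m) with (C * a ^ S N * b ^ m / (1 - a)) by (field; lra).
      apply series_bound; auto. intros i.
      replace (C * a ^ S N * b ^ m * a ^ i) with (C * a ^ (S N + i) * b ^ m) by (rewrite pow_add; ring).
      apply Hu. }
    rewrite (is_series_unique _ _ HDs) in Db. rewrite Rabs_minus_sym. apply Db. }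
  apply is_series_Reals. intros eps He.
  assert (Hy : 0 < eps * (1 - a) * (1 - b) / (C + 1)).
  { apply Rdiv_lt_0_compat; [|lra]. apply Rmult_lt_0_compat; [apply Rmult_lt_0_compat|]; lra. }
  destruct (pow_lt_1_zero a ltac:(rewrite Rabs_pos_eq; lra) _ Hy) as [N0 HN0].
  exists N0. intros k Hk. unfold R_dist.
  eapply Rle_lt_trans. { apply Key. }
  specialize (HN0 k Hk). rewrite Rabs_pos_eq in HN0 by (apply pow_le; lra).
  assert (Hp : a ^ S k <= a ^ k) by (simpl; pose proof (pow_le a k ltac:(lra)); nra).
  apply Rle_lt_trans with (C * (eps * (1 - a) * (1 - b) / (C + 1)) / (1 - a) / (1 - b)).
  - unfold Rdiv. repeat apply Rmult_le_compat_r; try (left; apply Rinv_0_lt_compat; lra).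
    apply Rmult_le_compat_l; auto. unfold Rdiv in HN0. lra.
  - replace (C * (eps * (1 - a) * (1 - b) / (C + 1)) / (1 - a) / (1 - b)) with (eps * (C / (C + 1))) by (field; lra).
    assert (C / (C + 1) < 1) by (apply Rmult_lt_reg_r with (C + 1); [lra|]; unfold Rdiv; rewrite Rmult_assoc, Rinv_l; lra).
    nra.
Qed.


Lemma half_pow_le i m : (i <= m)%nat -> (/ 2) ^ m <= (/ 2) ^ i.
Proof.
  intros H. induction H as [|m H IH]; [lra|].
  simpl. assert (0 <= (/ 2) ^ m) by (apply pow_le; lra). lra.
Qed.

Lemma term_le_exp z m : 0 <= z -> z ^ m / INR (fact m) <= exp z.
Proof.
  intros Hz. eapply Rle_trans; [|apply (exp_ge_taylor z m Hz)].
  assert (Hp : forall k, 0 <= z ^ k / INR (fact k)).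
  { intros k. apply Rdiv_le_0_compat; [apply pow_le; auto| apply INR_fact_lt_0]. }
  destruct m as [|m]. { simpl. lra. }
  rewrite tech5. pose proof (cond_pos_sum _ m Hp). lra.
Qed.

Lemma estimate y m a b : (m <= b)%nat ->
  Rabs ((-1) ^ m * y ^ (2 * m) / (INR (fact a) * INR (fact b))) <= exp (4 * y²) * (/ 4) ^ m.
Proof.
  intros Hb.
  assert (Fa : 1 <= INR (fact a)) by (apply (le_INR 1); pose proof (Factorial.lt_O_fact a); lia).
  assert (Fb : INR (fact m) <= INR (fact b)) by (apply le_INR; apply Factorial.fact_le; auto).
  assert (Fm := INR_fact_lt_0 m).
  assert (Y : 0 <= (y²) ^ m) by (apply pow_le; apply Rle_0_sqr).
  assert (E : Rabs ((-1) ^ m * y ^ (2 * m) / (INR (fact a) * INR (fact b))) = (y²) ^ m / (INR (fact a) * INR (fact b))).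
  { unfold Rdiv. rewrite Rabs_mult, Rabs_mult, pow_1_abs, Rabs_inv.
    rewrite (Rabs_pos_eq (INR _ * INR _)) by (apply Rmult_le_pos; apply pos_INR).
    rewrite pow_mult. rewrite (Rabs_pos_eq ((y ^ 2) ^ m)) by (apply pow_le; apply pow2_ge_0).
    replace (y ^ 2) with (y²) by (unfold Rsqr; ring). ring. }
  rewrite E.
  apply Rle_trans with ((y²) ^ m / INR (fact m)).
  - unfold Rdiv. apply Rmult_le_compat_l; auto.
    apply Rinv_le_contravar; auto. nra.
  - replace ((y²) ^ m / INR (fact m)) with ((4 * y²) ^ m / INR (fact m) * (/ 4) ^ m).
    + apply Rmult_le_compat_r; [apply pow_le; lra|]. apply term_le_exp.
      pose proof (Rle_0_sqr y). lra.
    + rewrite (Rpow_mult_distr 4 (y²) m).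
      assert (H4 : 4 ^ m * (/ 4) ^ m = 1) by (rewrite <- Rpow_mult_distr; replace (4 * / 4) with 1 by field; apply pow1).
      replace (4 ^ m * y² ^ m / INR (fact m) * (/ 4) ^ m) with ((4 ^ m * (/ 4) ^ m) * (y² ^ m / INR (fact m))) by (unfold Rdiv; generalize (4 ^ m) ((/ 4) ^ m) (y² ^ m) (/ INR (fact m)); intros; ring).
      rewrite H4. apply Rmult_1_l.
Qed.

Lemma cos_series z : is_series (fun m => cos_n m * (z²) ^ m) (cos z).
Proof.
  unfold cos. destruct (exist_cos (z²)) as [l Hl]. apply is_series_Reals. exact Hl.
Qed.

Lemma sum_swap (f : nat -> nat -> R) N M :
  sum_f_R0 (fun l => sum_f_R0 (fun k => f l k) M) N = sum_f_R0 (fun k => sum_f_R0 (fun l => f l k) N) M.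
Proof.
  induction N as [|N IH].
  - reflexivity.
  - rewrite tech5, IH, <- sum_plus. apply sum_eq. intros; reflexivity.
Qed.


Definition PP (x : R) (m : nat) : R := (-1) ^ m * (x / 2) ^ (2 * m) / INR (fact (2 * m)).

Definition uu (n : nat) (x : R) (i m : nat) : R :=
  if Nat.leb (2 * n * i) m then
    2 * (-1) ^ i * ((-1) ^ m * (x / 2) ^ (2 * m) / (INR (fact (m - 2 * n * i)) * INR (fact (m + 2 * n * i))))
  else 0.

Lemma uu_P n x i m : uu n x i m =
  (if Nat.leb (2 * n * i) m then 2 * ((-1) ^ i * bin (2 * m) (m - 2 * n * i)) else 0) * PP x m.
Proof.
  unfold uu, PP. destruct (Nat.leb_spec (2 * n * i) m) as [H|H]; [|ring].
  assert (Hb := bin_fact (2 * m) (m - 2 * n * i) ltac:(lia)).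
  replace (2 * m - (m - 2 * n * i))%nat with (m + 2 * n * i)%nat in Hb by lia.
  assert (F1 := INR_fact_lt_0 (m - 2 * n * i)). assert (F2 := INR_fact_lt_0 (m + 2 * n * i)).
  assert (F3 := INR_fact_lt_0 (2 * m)).
  assert (Bv : bin (2 * m) (m - 2 * n * i) = INR (fact (2 * m)) / (INR (fact (m - 2 * n * i)) * INR (fact (m + 2 * n * i))))
    by (rewrite <- Hb; field; split; lra).
  rewrite Bv. field. repeat split; lra.
Qed.

Lemma j0_P x m : (-1) ^ m * (x / 2) ^ (0 + 2 * m) / (INR (fact m) * INR (fact (m + 0))) = bin (2 * m) m * PP x m.
Proof.
  unfold PP. assert (Hb := bin_fact (2 * m) m ltac:(lia)).
  replace (2 * m - m)%nat with m in Hb by lia. rewrite Nat.add_0_r. replace (0 + 2 * m)%nat with (2 * m)%nat by lia.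
  assert (F1 := INR_fact_lt_0 m). assert (F3 := INR_fact_lt_0 (2 * m)).
  assert (Bv : bin (2 * m) m = INR (fact (2 * m)) / (INR (fact m) * INR (fact m)))
    by (rewrite <- Hb; field; lra).
  rewrite Bv. field. repeat split; lra.
Qed.

Lemma cos_P x c m : cos_n m * ((x * c)²) ^ m = (4 ^ m * c ^ (2 * m)) * PP x m.
Proof.
  unfold PP, cos_n.
  replace ((x * c)²) with ((x / 2) ^ 2 * 4 * c ^ 2) by (unfold Rsqr; field).
  rewrite !Rpow_mult_distr. rewrite !pow_mult. unfold Rdiv. ring.
Qed.

Lemma uu_bound n x i m : (1 <= n)%nat ->
  Rabs (uu n x i m) <= 2 * exp (4 * (x / 2)²) * (/ 2) ^ i * (/ 2) ^ m.
Proof.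
  intros Hn. assert (He := exp_pos (4 * (x / 2)²)).
  assert (P1 := pow_le (/ 2) i ltac:(lra)). assert (P2 := pow_le (/ 2) m ltac:(lra)).
  unfold uu. destruct (Nat.leb_spec (2 * n * i) m) as [H|H].
  - rewrite Rabs_mult, Rabs_mult, pow_1_abs, (Rabs_pos_eq 2) by lra.
    assert (E := estimate (x / 2) m (m - 2 * n * i) (m + 2 * n * i) ltac:(lia)).
    assert (Q : (/ 4) ^ m <= (/ 2) ^ i * (/ 2) ^ m).
    { replace (/ 4) with (/ 2 * / 2) by field. rewrite Rpow_mult_distr.
      apply Rmult_le_compat_r; auto. apply half_pow_le. nia. }
    assert (0 <= (/ 4) ^ m) by (apply pow_le; lra).
    apply Rle_trans with (2 * (exp (4 * (x / 2)²) * (/ 4) ^ m)); [lra|].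
    assert (exp (4 * (x / 2)²) * (/ 4) ^ m <= exp (4 * (x / 2)²) * ((/ 2) ^ i * (/ 2) ^ m))
      by (apply Rmult_le_compat_l; lra).
    lra.
  - rewrite Rabs_R0. repeat apply Rmult_le_pos; lra.
Qed.

Lemma uu_ex n x i : (1 <= n)%nat -> ex_series (uu n x i).
Proof.
  intros Hn. refine (proj1 (series_bound _ (2 * exp (4 * (x / 2)²) * (/ 2) ^ i) (/ 2) ltac:(lra) _)).
  intros m. apply uu_bound; auto.
Qed.

Lemma uu_row n x i : (1 <= n)%nat -> Series (uu n x i) = 2 * (-1) ^ i * besselJ (4 * i * n) x.
Proof.
  intros Hn. rewrite (shift_zero _ (2 * n * i)).
  - unfold besselJ. rewrite <- Series_scal_l. apply Series_ext. intros k. unfold uu.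
    destruct (Nat.leb_spec (2 * n * i) (2 * n * i + k)) as [_|H]; [|lia].
    replace (2 * n * i + k - 2 * n * i)%nat with k by lia.
    replace (2 * n * i + k + 2 * n * i)%nat with (k + 4 * i * n)%nat by lia.
    replace (2 * (2 * n * i + k))%nat with (4 * i * n + 2 * k)%nat by lia.
    replace (2 * n * i + k)%nat with (2 * (n * i) + k)%nat by lia.
    rewrite pow_add, pow_mult. replace ((-1) ^ 2) with 1 by ring. rewrite pow1.
    unfold Rdiv. ring.
  - apply uu_ex; auto.
  - intros k Hk. unfold uu. destruct (Nat.leb_spec (2 * n * i) k); [lia|auto].
Qed.

Lemma uu_col n x m : (1 <= n)%nat -> Series (fun i => uu n x i m) = sum_f_R0 (fun i => uu n x i m) m.
Proof.
  intros Hn. apply is_series_unique. apply fin_support. intros i Hi.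
  unfold uu. destruct (Nat.leb_spec (2 * n * i) m); [nia|auto].
Qed.


Lemma key_sparse n m : (1 <= n)%nat ->
  sum_f_R0 (fun i => if Nat.leb (2 * n * i) m then 2 * ((-1) ^ i * bin (2 * m) (m - 2 * n * i)) else 0) m =
  2 * sum_f_R0 (fun k => bin (2 * m) (m - k) * ee n k) m.
Proof.
  intros Hn.
  set (h := fun j : nat => (-1) ^ j * bin (2 * m) (m - 2 * n * j)).
  rewrite (sum_eq (fun k => bin (2 * m) (m - k) * ee n k) (fun k => if Nat.eqb (k mod (2 * n)) 0 then h (k / (2 * n))%nat else 0)).
  - rewrite sparse by lia. rewrite scal_sum. apply sum_eq. intros i _.
    destruct (Nat.leb (2 * n * i) m); unfold h; ring.
  - intros k _. unfold ee, h. destruct (Nat.eqb_spec (k mod (2 * n)) 0) as [E|E]; [|ring].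
    pose proof (Nat.div_mod_eq k (2 * n)) as D. rewrite E, Nat.add_0_r in D.
    replace (m - k)%nat with (m - 2 * n * (k / (2 * n)))%nat by (f_equal; symmetry; exact D). ring.
Qed.

Lemma term_eq n x m : (1 <= n)%nat ->
  sum_f_R0 (fun i => uu n x i m) m - (-1) ^ m * (x / 2) ^ (0 + 2 * m) / (INR (fact m) * INR (fact (m + 0)))
  = / INR n * sum_f_R0 (fun l => cos_n m * ((x * cos (th n l))²) ^ m) (n - 1).
Proof.
  intros Hn. assert (Hn0 : 0 < INR n) by (apply lt_0_INR; lia).
  rewrite j0_P.
  rewrite (sum_eq _ (fun i => (if Nat.leb (2 * n * i) m then 2 * ((-1) ^ i * bin (2 * m) (m - 2 * n * i)) else 0) * PP x m))
    by (intros; apply uu_P).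
  rewrite <- scal_sum. rewrite key_sparse by auto.
  rewrite (sum_eq (fun l => cos_n m * ((x * cos (th n l))²) ^ m) (fun l => (4 ^ m * cos (th n l) ^ (2 * m)) * PP x m)) by (intros; apply cos_P).
  rewrite <- scal_sum.
  rewrite (sum_eq (fun l => 4 ^ m * cos (th n l) ^ (2 * m))
     (fun l => sum_f_R0 (fun k => bin (2 * m) (m - k) * cos (2 * INR k * th n l)) m * 2 - bin (2 * m) m))
    by (intros; rewrite cos_pow2; ring).
  rewrite minus_sum, sum_cte. rewrite <- scal_sum.
  rewrite sum_swap.
  rewrite (sum_eq (fun k => sum_f_R0 (fun l => bin (2 * m) (m - k) * cos (2 * INR k * th n l)) (n - 1))
     (fun k => bin (2 * m) (m - k) * ee n k * INR n)).
  2:{ intros k _. rewrite (sum_eq _ (fun l => cos (2 * INR k * th n l) * bin (2 * m) (m - k))) by (intros; ring).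
      rewrite <- scal_sum. rewrite avg_cos by auto. ring. }
  rewrite <- scal_sum. replace (S (n - 1)) with n by lia.
  field. lra.
Qed.


Theorem mainTheorem11 (n : nat) (hn : (1 <= n)%nat) (x : R) :
  ex_series (fun i : nat => Rabs ((-1) ^ (S i) * besselJ (4 * S i * n) x)) /\
  exists s : R,
    is_series (fun i : nat => (-1) ^ (S i) * besselJ (4 * S i * n) x) s /\
    besselJ 0 x + 2 * s =
      / INR n * sum_f_R0 (fun l : nat =>
                  cos (x * cos ((1 + 4 * INR l) * PI / (4 * INR n)))) (n - 1).
Proof.
  set (E := exp (4 * (x / 2)²)).
  assert (HE : 0 < E) by apply exp_pos.
  assert (Hu : forall i m, Rabs (uu n x i m) <= 2 * E * (/ 2) ^ i * (/ 2) ^ m) by (intros; apply uu_bound; auto).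
  destruct (fubini (uu n x) (2 * E) (/ 2) (/ 2) ltac:(lra) ltac:(lra) Hu) as [BB Fub].
  set (T := Series (fun m => Series (fun i => uu n x i m))) in *.
  assert (Ex1 : ex_series (fun i => Rabs ((-1) ^ (S i) * besselJ (4 * S i * n) x))).
  { refine (proj1 (series_bound _ E (/ 2) ltac:(lra) _)). intros i.
    rewrite Rabs_Rabsolu, Rabs_mult, pow_1_abs, Rmult_1_l.
    assert (B := proj2 (series_bound (uu n x (S i)) (2 * E * (/ 2) ^ (S i)) (/ 2) ltac:(lra) (fun m => Hu (S i) m))).
    rewrite uu_row in B by auto. rewrite Rabs_mult, Rabs_mult, pow_1_abs, (Rabs_pos_eq 2) in B by lra.
    replace (2 * E * (/ 2) ^ S i / (1 - / 2)) with (2 * (E * (/ 2) ^ i)) in B by (simpl; field).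
    lra. }
  split; [exact Ex1|].
  set (s := Series (fun i => (-1) ^ (S i) * besselJ (4 * S i * n) x)).
  assert (Hs : is_series (fun i => (-1) ^ (S i) * besselJ (4 * S i * n) x) s)
    by (apply Series_correct; apply ex_series_Rabs; exact Ex1).
  exists s. split; [exact Hs|].
  assert (F2 : is_series (fun i => 2 * (-1) ^ i * besselJ (4 * i * n) x) T).
  { eapply is_series_ext; [|exact Fub]. intros i. apply uu_row; auto. }
  assert (F3 : is_series (fun i => 2 * (-1) ^ (S i) * besselJ (4 * S i * n) x) (T - 2 * besselJ 0 x)).
  { apply (is_series_incr_1 (fun i => 2 * (-1) ^ i * besselJ (4 * i * n) x)).
    match goal with |- is_series _ ?L => replace L with T; [exact F2|] end.
    replace (4 * 0 * n)%nat with 0%nat by lia. change (T = T - 2 * besselJ 0 x + 2 * (-1) ^ 0 * besselJ 0 x).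
    simpl. ring. }
  assert (Hs2 : is_series (fun i => 2 * (-1) ^ (S i) * besselJ (4 * S i * n) x) (2 * s)).
  { eapply is_series_ext; [|exact (is_series_scal_l 2 _ s Hs)]. intros i. change (2 * ((-1) ^ S i * besselJ (4 * S i * n) x) = 2 * (-1) ^ S i * besselJ (4 * S i * n) x). ring. }
  assert (Ts : T - 2 * besselJ 0 x = 2 * s).
  { rewrite <- (is_series_unique _ _ F3). apply is_series_unique. exact Hs2. }
  assert (J0s : is_series (fun k => (-1) ^ k * (x / 2) ^ (0 + 2 * k) / (INR (fact k) * INR (fact (k + 0)))) (besselJ 0 x)).
  { apply Series_correct. refine (proj1 (series_bound _ E (/ 4) ltac:(lra) _)). intros k.
    apply estimate. lia. }
  assert (Bs : is_series (fun m => Series (fun i => uu n x i m)) T) by (apply Series_correct; exact BB).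
  assert (Diff := is_series_minus _ _ _ _ Bs J0s).
  assert (Rs : is_series (fun m => / INR n * sum_f_R0 (fun l => cos_n m * ((x * cos (th n l))²) ^ m) (n - 1))
                 (/ INR n * sum_f_R0 (fun l => cos (x * cos (th n l))) (n - 1))).
  { apply (is_series_scal_l (/ INR n) (fun m => sum_f_R0 (fun l => cos_n m * ((x * cos (th n l))²) ^ m) (n - 1))).
    apply (fsum_series (fun l m => cos_n m * ((x * cos (th n l))²) ^ m)). intros l. apply cos_series. }
  assert (Diff2 : is_series (fun m => / INR n * sum_f_R0 (fun l => cos_n m * ((x * cos (th n l))²) ^ m) (n - 1))
                    (T - besselJ 0 x)).
  { eapply is_series_ext; [|exact Diff]. intros m. simpl. rewrite uu_col by auto.
    change (sum_f_R0 (fun i => uu n x i m) m - (-1) ^ m * (x / 2) ^ (0 + 2 * m) / (INR (fact m) * INR (fact (m + 0))) =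
            / INR n * sum_f_R0 (fun l => cos_n m * ((x * cos (th n l))²) ^ m) (n - 1)).
    apply term_eq; auto. }
  assert (U1 := is_series_unique _ _ Rs). assert (U2 := is_series_unique _ _ Diff2).
  rewrite U1 in U2. unfold th in U2. lra.
Qed.
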